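(* $$\sum_{n=1}^\infty \frac{H_n \binom{2n}{n}}{n\, 2^{2n}} = \frac{\pi^2}{3}.$$
   Context: $H_n=\sum_{k=1}^n \frac{1}{k}$ denotes the $n$-th harmonic number and $\binom{2n}{n}$ the central binomial coefficient. *)

(* Defs.v *)
From Stdlib Require Import Reals.
From Coquelicot Require Import Coquelicot.
Open Scope R_scope.

Fixpoint harmonic (n : nat) : R :=
  match n with
  | O => 0
  | S m => harmonic m + / INR (S m)
  end.

Definition central_binom (n : nat) : R := Binomial.C (2 * n) n.

(* the n-th term for n >= 1; index shifted so that term k corresponds to n = k+1 *)
Definition term (n : nat) : R :=
  harmonic n * central_binom n / (INR n * 2 ^ (2 * n)).

(* Main.v *)
Require Import Defs.
From Stdlib Require Import Reals Lra Lia Nsatz.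
From Coquelicot Require Import Coquelicot.
Open Scope R_scope.

Lemma ftc (f df : R -> R) a b : a <= b ->
  (forall x, a <= x <= b -> is_derive f x (df x)) ->
  (forall x, a <= x <= b -> continuous df x) ->
  RInt df a b = f b - f a.
Proof.
  intros Hab Hd Hc. apply is_RInt_unique.
  apply (is_RInt_derive f df a b).
  - intros x Hx. apply Hd. rewrite Rmin_left in Hx by lra. rewrite Rmax_right in Hx by lra. lra.
  - intros x Hx. apply Hc. rewrite Rmin_left in Hx by lra. rewrite Rmax_right in Hx by lra. lra.
Qed.

Lemma cont_of (f : R -> R) x : ex_derive f x -> continuous f x.
Proof. intros H. apply (ex_derive_continuous (K:=R_AbsRing) (V:=R_NormedModule)). apply H. Qed.

Lemma exR (f : R -> R) a b : (forall x, ex_derive f x) -> ex_RInt f a b.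
Proof. intros H. apply (ex_RInt_continuous (V:=R_CompleteNormedModule)). intros z _. apply cont_of. apply H. Qed.

Lemma RInt_lin2 (f g : R -> R) a b p q : ex_RInt f a b -> ex_RInt g a b ->
  RInt (fun x => p * f x - q * g x) a b = p * RInt f a b - q * RInt g a b.
Proof.
  intros H1 H2. apply is_RInt_unique.
  exact (is_RInt_minus _ _ _ _ _ _ (is_RInt_scal _ _ _ p _ (RInt_correct _ _ _ H1))
                                  (is_RInt_scal _ _ _ q _ (RInt_correct _ _ _ H2))).
Qed.

Lemma RInt_lin3 (f g h : R -> R) a b p q r : ex_RInt f a b -> ex_RInt g a b -> ex_RInt h a b ->
  RInt (fun x => p * f x - q * g x - r * h x) a b = p * RInt f a b - q * RInt g a b - r * RInt h a b.
Proof.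
  intros H1 H2 H3. apply is_RInt_unique.
  exact (is_RInt_minus _ _ _ _ _ _ (is_RInt_minus _ _ _ _ _ _ (is_RInt_scal _ _ _ p _ (RInt_correct _ _ _ H1))
                                  (is_RInt_scal _ _ _ q _ (RInt_correct _ _ _ H2)))
                                  (is_RInt_scal _ _ _ r _ (RInt_correct _ _ _ H3))).
Qed.

Definition Ci n := RInt (fun x => cos x ^ n) 0 (PI/2).
Definition Wi n := RInt (fun x => (PI*x - x^2) * cos x ^ n) 0 (PI/2).

Ltac toR := match goal with |- ?a = ?b => change (@eq R a b) end.

Lemma PI2_pos : 0 <= PI/2.
Proof. pose proof PI_RGT_0. lra. Qed.

Lemma match_INR m : match m with 0%nat => 1 | S _ => INR m + 1 end = INR m + 1.
Proof. destruct m; simpl; lra. Qed.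

Lemma Ci0 : Ci 0 = PI/2.
Proof.
  unfold Ci. rewrite (ftc (fun x => x) _ 0 (PI/2) PI2_pos). lra.
  - intros x _. simpl. auto_derive; auto.
  - intros x _. apply cont_of. auto_derive. auto.
Qed.

Lemma Wi0 : Wi 0 = PI^3/12.
Proof.
  unfold Wi. rewrite (ftc (fun x => PI * x^2/2 - x^3/3) _ 0 (PI/2) PI2_pos). toR. field.
  - intros x _. auto_derive. auto. toR. field.
  - intros x _. apply cont_of. auto_derive. auto.
Qed.

Lemma Ci_rec m : INR (m+2) * Ci (m+2) - INR (m+1) * Ci m = 0.
Proof.
  unfold Ci. rewrite <- RInt_lin2 by (apply exR; intros; auto_derive; auto).
  rewrite (ftc (fun x => cos x ^ (S m) * sin x) _ 0 (PI/2) PI2_pos).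
  rewrite cos_PI2, sin_0. simpl. ring.
  - intros x _. auto_derive. auto. rewrite match_INR, !plus_INR, !pow_add. simpl.
    assert (H := sin2_cos2 x). unfold Rsqr in H. nsatz.
  - intros x _. apply cont_of. auto_derive. auto.
Qed.

Lemma Wi_rec m : INR (m+2) * Wi (m+2) - INR (m+1) * Wi m - (2 / INR (m+2)) * Ci (m+2) = - PI / INR (m+2).
Proof.
  unfold Wi, Ci. rewrite <- RInt_lin3 by (apply exR; intros; auto_derive; auto).
  assert (Hn : INR (m+2) <> 0) by (rewrite plus_INR; simpl; pose proof (pos_INR m); lra).
  set (r := / INR (m+2)).
  assert (Hr : r * INR (m+2) = 1) by (unfold r; field; auto).
  rewrite (ftc (fun x => (PI*x - x^2) * cos x ^ (S m) * sin x + (PI - 2*x) * cos x ^ (m+2) * r) _ 0 (PI/2) PI2_pos).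
  rewrite cos_PI2, sin_0, cos_0. rewrite pow_add. simpl. unfold r. rewrite !pow1. toR. field. auto.
  - intros x _. auto_derive. auto. unfold Rdiv. fold r.
    replace (Init.Nat.pred (m + 2)) with (S m) by lia.
    rewrite match_INR, !plus_INR, !pow_add. simpl.
    assert (H := sin2_cos2 x). unfold Rsqr in H. 
    rewrite plus_INR in Hr. simpl in Hr. nsatz.
  - intros x _. apply cont_of. auto_derive. auto.
Qed.
Definition cb n := central_binom n / 2^(2*n).

Lemma cb0 : cb 0 = 1.
Proof. unfold cb, central_binom, Binomial.C. simpl. field. Qed.

Lemma cb_S n : cb (S n) = cb n * (2*INR n + 1) / (2*INR n + 2).
Proof.
  unfold cb, central_binom, Binomial.C.
  replace (2 * S n - S n)%nat with (S n) by lia. replace (2 * n - n)%nat with n by lia.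
  replace (2 * S n)%nat with (S (S (2*n))) by lia.
  replace (2 ^ S (S (2*n))) with (4 * 2^(2*n)) by (simpl; ring).
  rewrite !fact_simpl, !mult_INR, !S_INR, mult_INR. simpl INR.
  assert (H1 := INR_fact_neq_0 n). assert (H2 := INR_fact_neq_0 (2*n)).
  assert (H3 := pos_INR n). assert (H4: 2^(2*n) <> 0) by (apply pow_nonzero; lra).
  field. repeat split; auto; lra.
Qed.

Lemma divK A B : B <> 0 -> A / B * B = A.
Proof. intros. field. auto. Qed.

Fixpoint ssum (f : nat -> R) (n : nat) : R :=
  match n with O => 0 | S k => ssum f k + f k end.

Lemma ssum_ext f g n : (forall i, (i < n)%nat -> f i = g i) -> ssum f n = ssum g n.
Proof. induction n; intros H; simpl; auto. rewrite IHn, H; auto. Qed.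

Lemma ssum_le f g n : (forall i, (i < n)%nat -> f i <= g i) -> ssum f n <= ssum g n.
Proof. induction n; intros H; simpl. lra. assert (H1 := H n (Nat.lt_succ_diag_r n)). 
  assert (ssum f n <= ssum g n) by (apply IHn; intros; apply H; lia). lra. Qed.

Lemma ssum_plus f g n : ssum (fun i => f i + g i) n = ssum f n + ssum g n.
Proof. induction n; simpl. ring. rewrite IHn. ring. Qed.

Lemma ssum_minus f g n : ssum (fun i => f i - g i) n = ssum f n - ssum g n.
Proof. induction n; simpl. ring. rewrite IHn. ring. Qed.

Lemma ssum_scal a f n : ssum (fun i => a * f i) n = a * ssum f n.
Proof. induction n; simpl. ring. rewrite IHn. ring. Qed.

Lemma ssum_swap (a : nat -> nat -> R) N K :
  ssum (fun i => ssum (fun j => a i j) K) N = ssum (fun j => ssum (fun i => a i j) N) K.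
Proof. induction N; simpl. induction K; simpl; auto. rewrite <- IHK. ring.
  rewrite IHN, <- ssum_plus. reflexivity. Qed.

Lemma ssum_const c n : ssum (fun _ => c) n = INR n * c.
Proof. induction n; simpl ssum. simpl. ring. rewrite IHn, S_INR. ring. Qed.

Lemma sum_n_ssum a N : sum_n a N = ssum a (S N).
Proof. induction N. rewrite sum_O. simpl. symmetry. apply Rplus_0_l. rewrite sum_Sn, IHN. reflexivity. Qed.

Lemma cb_pos n : 0 < cb n.
Proof. induction n. rewrite cb0; lra. rewrite cb_S. assert (H := pos_INR n).
  apply Rdiv_lt_0_compat; [apply Rmult_lt_0_compat|]; lra. Qed.

Lemma cb_le1 n : cb n <= 1.
Proof. induction n. rewrite cb0; lra. rewrite cb_S. assert (H := pos_INR n). assert (H' := cb_pos n).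
  apply Rmult_le_reg_r with (2 * INR n + 2). lra. unfold Rdiv. rewrite Rmult_assoc, Rinv_l, Rmult_1_r by lra. nra. Qed.

Lemma cb_sq_up n : cb n * cb n * (2 * INR n + 1) <= 1.
Proof. induction n. rewrite cb0. simpl. lra.
  rewrite cb_S. set (c := cb n) in *. assert (H := pos_INR n). set (m := INR n) in *. rewrite S_INR. fold m.
  replace (c*(2*m+1)/(2*m+2) * (c*(2*m+1)/(2*m+2)) * (2*(m+1)+1)) with ((c*c*(2*m+1)) * ((2*m+1)*(2*m+3)) / ((2*m+2)*(2*m+2))) by (field; lra).
  apply Rmult_le_reg_r with ((2*m+2)*(2*m+2)). nra. unfold Rdiv. rewrite Rmult_assoc, Rinv_l, Rmult_1_r by nra.
  assert (0 <= c*c*(2*m+1)) by (assert (0 < c) by apply cb_pos; nra). nra. Qed.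

Lemma cb_sq_low n : (1 <= n)%nat -> 1 <= 4 * INR n * (cb n * cb n).
Proof. induction n. lia. intros _. destruct n. rewrite cb_S, cb0. simpl. lra.
  assert (IH : 1 <= 4 * INR (S n) * (cb (S n) * cb (S n))) by (apply IHn; lia).
  rewrite (cb_S (S n)). set (c := cb (S n)) in *. assert (H := pos_INR (S n)). set (m := INR (S n)) in *. rewrite (S_INR (S n)). fold m.
  replace (4 * (m + 1) * (c * (2 * m + 1) / (2 * m + 2) * (c * (2 * m + 1) / (2 * m + 2)))) with ((4*m*(c*c)) * ((m+1)*(2*m+1)*(2*m+1)) / (m*(2*m+2)*(2*m+2))).
  2:{ assert (Hm : 1 <= m) by (unfold m; rewrite S_INR; pose proof (pos_INR n); lra). field. split; lra. }
  assert (Hm : 1 <= m) by (unfold m; rewrite S_INR; pose proof (pos_INR n); lra).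
  apply Rmult_le_reg_r with (m*(2*m+2)*(2*m+2)). apply Rmult_lt_0_compat; nra. rewrite divK. 2: nra.
  assert (0 < (m+1)*(2*m+1)*(2*m+1)) by nra. nra. Qed.

Definition u k := / (INR k * cb k).
Definition g M k := ssum (fun n => cb n / (INR n + INR k)) M.

Lemma u1 : u 1 = 2.
Proof. unfold u. rewrite cb_S, cb0. simpl. field. Qed.

Lemma u_S k : (1<=k)%nat -> u (S k) = u k * (2*INR k) / (2*INR k + 1).
Proof. intros Hk. unfold u. rewrite cb_S, S_INR. assert (H := cb_pos k).
  assert (1 <= INR k) by (apply (le_INR 1); auto). field. repeat split; lra. Qed.

Lemma u_ge k : (1<=k)%nat -> / INR k <= u k.
Proof. intros Hk. unfold u. assert (H := cb_pos k). assert (H1 := cb_le1 k).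
  assert (1 <= INR k) by (apply (le_INR 1); auto).
  rewrite Rinv_mult. rewrite <- (Rmult_1_r (/ INR k)) at 1. apply Rmult_le_compat_l.
  apply Rlt_le, Rinv_0_lt_compat; lra. rewrite <- Rinv_1. apply Rinv_le_contravar; lra. Qed.

Lemma g1 M : g M 1 = 2*(1 - cb M).
Proof. unfold g. induction M; simpl ssum. rewrite cb0. ring.
  simpl INR in IHM. rewrite IHM, cb_S. assert (H := pos_INR M). simpl INR. field. lra. Qed.

Lemma g_rec M k : (1<=k)%nat -> (2*INR k+1) * g M (S k) - 2*INR k * g M k = - 2*INR M*cb M/(INR M + INR k).
Proof. intros Hk. assert (1 <= INR k) by (apply (le_INR 1); auto). unfold g in *.
  induction M. { simpl. field. lra. } cbn [ssum].
  replace ((2 * INR k + 1) * (ssum (fun n : nat => cb n / (INR n + INR (S k))) M + cb M / (INR M + INR (S k))) -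
   2 * INR k * (ssum (fun n : nat => cb n / (INR n + INR k)) M + cb M / (INR M + INR k)))
  with (((2 * INR k + 1) * ssum (fun n : nat => cb n / (INR n + INR (S k))) M -
   2 * INR k * ssum (fun n : nat => cb n / (INR n + INR k)) M) + ((2 * INR k + 1) * (cb M / (INR M + INR (S k))) - 2 * INR k * (cb M / (INR M + INR k)))) by ring.
  rewrite IHM. rewrite cb_S, !S_INR. assert (HM := pos_INR M). field. lra. Qed.

Lemma g_bounds M k : u (S k) - 2*INR (S k) * cb M <= g M (S k) <= u (S k).
Proof. induction k.
  - rewrite u1, g1. simpl. assert (H := cb_pos M). lra.
  - assert (Hk : (1 <= S k)%nat) by lia. assert (R1 := g_rec M (S k) Hk).
    rewrite (u_S (S k) Hk). set (gk := g M (S k)) in *. set (uk := u (S k)) in *.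
    set (gk1 := g M (S (S k))) in *. set (m := INR (S k)) in *. rewrite (S_INR (S k)). fold m.
    assert (Hm : 1 <= m) by (apply (le_INR 1); auto). assert (Hc := cb_pos M). assert (HM := pos_INR M).
    assert (Hq : 0 <= 2 * INR M * cb M / (INR M + m) <= 2 * cb M).
    { split. apply Rdiv_le_0_compat; nra. apply Rmult_le_reg_r with (INR M + m). lra. rewrite divK by lra. nra. }
    assert (E : gk1 = (2*m*gk - 2 * INR M * cb M / (INR M + m)) / (2*m+1)).
    { apply Rmult_eq_reg_r with (2*m+1). 2: lra. rewrite divK by lra. 
      replace (- 2 * INR M * cb M / (INR M + m)) with (- (2 * INR M * cb M / (INR M + m))) in R1 by (field; lra). lra. }
    rewrite E. split.
    + apply Rmult_le_reg_r with (2*m+1). lra. rewrite divK by lra.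
      replace ((uk * (2 * m) / (2 * m + 1) - 2 * (m + 1) * cb M) * (2 * m + 1)) with (uk * (2*m) - 2*(m+1)*(2*m+1)*cb M) by (field; lra).
      nra.
    + apply Rmult_le_reg_r with (2*m+1). lra. rewrite !divK by lra. nra.
Qed.

Lemma harm_S m : harmonic (S m) = harmonic m + / INR (S m).
Proof. reflexivity. Qed.

Definition hs n K := ssum (fun j => / (INR (S j) * (INR n + INR (S j)))) K.

Lemma hs_eq n K : (1 <= n)%nat -> hs n K = (harmonic n + harmonic K - harmonic (n + K)) / INR n.
Proof. intros Hn. assert (1 <= INR n) by (apply (le_INR 1); auto). unfold hs.
  induction K. { simpl. rewrite Nat.add_0_r. field. lra. }
  cbn [ssum]. rewrite IHK. rewrite Nat.add_succ_r, !harm_S. rewrite !S_INR, plus_INR.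
  assert (HK := pos_INR K). field. repeat split; lra. Qed.

Lemma htail n K : 0 <= harmonic (n+K) - harmonic K <= INR n / INR (S K).
Proof. assert (HK := pos_INR K). rewrite S_INR. induction n.
  - simpl. split. lra. unfold Rdiv. rewrite Rmult_0_l. lra.
  - replace (S n + K)%nat with (S (n + K)) by lia. rewrite harm_S, S_INR, S_INR, plus_INR.
    assert (Hn := pos_INR n).
    assert (0 < / (INR n + INR K + 1) <= / (INR K + 1)).
    { split. apply Rinv_0_lt_compat; lra. apply Rinv_le_contravar; lra. }
    replace ((INR n + 1) / (INR K + 1)) with (INR n / (INR K + 1) + / (INR K + 1)) by (field; lra).
    lra. Qed.

Lemma hs_bounds n K : (1 <= n)%nat -> harmonic n / INR n - / INR (S K) <= hs n K <= harmonic n / INR n.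
Proof. intros Hn. assert (1 <= INR n) by (apply (le_INR 1); auto). rewrite hs_eq by auto.
  destruct (htail n K) as [H1 H2].
  replace ((harmonic n + harmonic K - harmonic (n + K)) / INR n) with (harmonic n / INR n - (harmonic (n+K) - harmonic K) / INR n) by (field; lra).
  split. 
  - assert ((harmonic (n + K) - harmonic K) / INR n <= / INR (S K)). 
    { apply Rmult_le_reg_r with (INR n). lra. rewrite divK by lra. 
      replace (/ INR (S K) * INR n) with (INR n / INR (S K)) by (unfold Rdiv; ring). lra. }
    lra.
  - assert (0 <= (harmonic (n + K) - harmonic K) / INR n) by (apply Rdiv_le_0_compat; lra). lra.
Qed.

Lemma term_eq i : term (S i) = harmonic (S i) * cb (S i) / INR (S i).
Proof. unfold term, cb. assert (H := pos_INR i). rewrite S_INR. 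
  assert (2 ^ (2 * S i) <> 0) by (apply pow_nonzero; lra). field. split; auto; lra. Qed.

Definition Sn N := ssum (fun i => term (S i)) N.
Definition a n k := cb n / (INR k * (INR n + INR k)).
Definition D N K := ssum (fun i => ssum (fun j => a (S i) (S j)) K) N.
Definition T K := ssum (fun j => (u (S j) - / INR (S j)) / INR (S j)) K.

Lemma inner_i i K : ssum (fun j => a (S i) (S j)) K = cb (S i) * hs (S i) K.
Proof. unfold hs. rewrite <- ssum_scal. apply ssum_ext. intros j _. unfold a. unfold Rdiv. ring. Qed.

Lemma D_le N K : D N K <= Sn N.
Proof. unfold D, Sn. apply ssum_le. intros i _. rewrite inner_i, term_eq.
  destruct (hs_bounds (S i) K) as [_ H]. lia. assert (Hc := cb_pos (S i)).
  replace (harmonic (S i) * cb (S i) / INR (S i)) with (cb (S i) * (harmonic (S i) / INR (S i))) by (unfold Rdiv; ring).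
  apply Rmult_le_compat_l; lra. Qed.

Lemma D_ge N K : Sn N - INR N / INR (S K) <= D N K.
Proof. unfold D, Sn. unfold Rdiv. replace (INR N * / INR (S K)) with (ssum (fun _ => / INR (S K)) N) by (rewrite ssum_const; ring).
  replace (ssum (fun i => term (S i)) N - ssum (fun _ => / INR (S K)) N) with (ssum (fun i => term (S i) - / INR (S K)) N).
  2:{ apply ssum_minus. }
  apply ssum_le. intros i _. rewrite inner_i, term_eq.
  destruct (hs_bounds (S i) K) as [H _]. lia. assert (Hc := cb_pos (S i)). assert (Hc1 := cb_le1 (S i)).
  assert (0 < / INR (S K)) by (apply Rinv_0_lt_compat; apply lt_0_INR; lia).
  replace (harmonic (S i) * cb (S i) / INR (S i)) with (cb (S i) * (harmonic (S i) / INR (S i))) by (unfold Rdiv; ring).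
  assert (cb (S i) * (harmonic (S i) / INR (S i) - / INR (S K)) <= cb (S i) * hs (S i) K) by (apply Rmult_le_compat_l; lra).
  nra. Qed.

Lemma g_shift M k : (1 <= k)%nat -> g (S M) k = / INR k + ssum (fun i => cb (S i) / (INR (S i) + INR k)) M.
Proof. intros Hk. assert (1 <= INR k) by (apply (le_INR 1); auto). unfold g. induction M.
  { simpl. rewrite cb0. field. lra. }
  change (ssum (fun n : nat => cb n / (INR n + INR k)) (S (S M))) with
    (ssum (fun n : nat => cb n / (INR n + INR k)) (S M) + cb (S M) / (INR (S M) + INR k)).
  rewrite IHM. cbn [ssum]. ring. Qed.

Lemma inner_j N j : ssum (fun i => a (S i) (S j)) N = (g (S N) (S j) - / INR (S j)) / INR (S j).
Proof. rewrite g_shift by lia. assert (0 < INR (S j)) by (apply lt_0_INR; lia).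
  replace (/ INR (S j) + ssum (fun i : nat => cb (S i) / (INR (S i) + INR (S j))) N - / INR (S j)) with
   (ssum (fun i : nat => cb (S i) / (INR (S i) + INR (S j))) N) by ring.
  match goal with |- _ = ?X / ?Y => replace (X / Y) with (/ Y * X) by (unfold Rdiv; ring) end.
  rewrite <- ssum_scal. apply ssum_ext. intros i _. unfold a.
  assert (0 <= INR (S i)) by apply pos_INR. field. lra. Qed.

Lemma D_bounds N K : T K - 2 * INR K * cb (S N) <= D N K <= T K.
Proof. unfold D. rewrite ssum_swap. unfold T.
  replace (2 * INR K * cb (S N)) with (ssum (fun _ => 2 * cb (S N)) K) by (rewrite ssum_const; ring).
  rewrite <- ssum_minus. split; apply ssum_le; intros j _; rewrite inner_j;
  destruct (g_bounds (S N) j) as [H1 H2]; assert (0 < INR (S j)) by (apply lt_0_INR; lia).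
  - apply Rmult_le_reg_r with (INR (S j)). lra.
    replace (((u (S j) - / INR (S j)) / INR (S j) - 2 * cb (S N)) * INR (S j)) with (u (S j) - / INR (S j) - 2 * INR (S j) * cb (S N)) by (field; lra).
    rewrite divK by lra. lra.
  - apply Rmult_le_reg_r with (INR (S j)). lra. rewrite !divK by lra. lra.
Qed.

Lemma Ci_even k : Ci (2*k) = PI/2 * cb k.
Proof. induction k. { rewrite cb0. simpl (2*0)%nat. rewrite Ci0. toR. ring. }
  assert (R := Ci_rec (2*k)). replace (2 * S k)%nat with (2*k+2)%nat by lia.
  rewrite cb_S. rewrite IHk in R. rewrite !plus_INR, mult_INR in R. simpl INR in R.
  assert (H := pos_INR k). apply Rmult_eq_reg_l with (2 * INR k + (1+1)). 2: lra.
  transitivity ((2 * INR k + 1) * (PI / 2 * cb k)). lra. field. lra. Qed.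

Lemma Ci_pos k : 0 < Ci (2*k).
Proof. rewrite Ci_even. assert (H := cb_pos k). assert (H' := PI_RGT_0). nra. Qed.

Definition tau k := Wi (2*k) / Ci (2*k).

Lemma T_eq K : T K = PI^2/3 - 2 * tau K.
Proof. induction K.
  { unfold T, tau. simpl ssum. simpl (2*0)%nat. rewrite Wi0, Ci0. assert (H' := PI_RGT_0). field. lra. }
  unfold T. cbn [ssum]. fold (T K). rewrite IHK. unfold tau.
  assert (RW := Wi_rec (2*K)). assert (RC := Ci_rec (2*K)).
  replace (2 * S K)%nat with (2*K+2)%nat by lia.
  rewrite Ci_even in RC. rewrite Ci_even.
  replace (Ci (2 * K + 2)) with (Ci (2 * S K)) in * by (f_equal; lia).
  rewrite Ci_even in RW, RC |- *. rewrite !plus_INR, mult_INR in RW, RC. simpl INR in RW, RC. replace (1+1) with 2 in RW, RC by ring.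
  unfold u. rewrite cb_S in *. rewrite S_INR.
  assert (H := pos_INR K). assert (Hc := cb_pos K). assert (HP := PI_RGT_0).
  set (W1 := Wi (2*K+2)) in *. set (W0 := Wi (2*K)) in *.
  assert (E : W0 = ((2 * INR K + 2) * W1 - 2 / (2 * INR K + 2) * (PI / 2 * (cb K * (2 * INR K + 1) / (2 * INR K + 2))) + PI / (2 * INR K + 2)) / (2 * INR K + 1)).
  { apply Rmult_eq_reg_r with (2 * INR K + 1). 2: lra. rewrite divK by lra.
    replace (- PI / (2 * INR K + 2)) with (- (PI / (2 * INR K + 2))) in RW by (field; lra). lra. }
  rewrite E. field. repeat split; lra.
Qed.

Lemma xcos_le_sin x : 0 <= x <= PI/2 -> x * cos x <= sin x.
Proof. intros Hx. assert (HP := PI_RGT_0).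
  assert (E : RInt (fun t => t * sin t) 0 x = (sin x - x * cos x) - (sin 0 - 0 * cos 0)).
  { apply (ftc (fun t => sin t - t * cos t)). lra.
    - intros t _. auto_derive. auto. ring.
    - intros t _. apply cont_of. auto_derive. auto. }
  assert (0 <= RInt (fun t => t * sin t) 0 x).
  { apply RInt_ge_0. lra. apply exR. intros; auto_derive; auto.
    intros t Ht. apply Rmult_le_pos. lra. apply sin_ge_0; lra. }
  rewrite sin_0 in E. lra. Qed.

Lemma Wi_nonneg n : 0 <= Wi n.
Proof. unfold Wi. assert (HP := PI_RGT_0). apply RInt_ge_0. lra. apply exR. intros; auto_derive; auto.
  intros x Hx. apply Rmult_le_pos. nra. apply pow_le. apply cos_ge_0; lra. Qed.

Lemma Wi_upper m : Wi (S m) <= PI / INR (S m).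
Proof. unfold Wi. assert (HP := PI_RGT_0). assert (Hm : 0 < INR (S m)) by (apply lt_0_INR; lia).
  apply Rle_trans with (RInt (fun x => PI * (sin x * cos x ^ m)) 0 (PI/2)).
  - apply RInt_le. lra. apply exR. intros; auto_derive; auto. apply exR. intros; auto_derive; auto.
    intros x Hx. assert (Hc : 0 <= cos x) by (apply cos_ge_0; lra).
    assert (Hp : 0 <= cos x ^ m) by (apply pow_le; auto).
    assert (Hs := xcos_le_sin x ltac:(lra)). simpl pow.
    assert (0 <= x * x * cos x * cos x ^ m) by (apply Rmult_le_pos; auto; apply Rmult_le_pos; auto; nra).
    assert (x * cos x * cos x ^ m <= sin x * cos x ^ m) by (apply Rmult_le_compat_r; auto).
    nra.
  - rewrite (ftc (fun x => - PI * cos x ^ (S m) / INR (S m))). 2: lra.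
    + rewrite cos_PI2, cos_0, pow1, pow_i by lia. right. toR. field. lra.
    + intros x _. auto_derive. auto. rewrite match_INR. rewrite S_INR in Hm. field. lra.
    + intros x _. apply cont_of. auto_derive. auto.
Qed.

Lemma tau_nonneg k : 0 <= tau k.
Proof. unfold tau. apply Rdiv_le_0_compat. apply Wi_nonneg. apply Ci_pos. Qed.

Lemma tau_sq k : (1 <= k)%nat -> tau k * tau k <= 4 / INR k.
Proof. intros Hk. assert (Hk' : 1 <= INR k) by (apply (le_INR 1); auto).
  assert (HP := PI_RGT_0). assert (Hc := cb_pos k). assert (HL := cb_sq_low k Hk).
  assert (Ht : tau k <= / (INR k * cb k)).
  { unfold tau. rewrite Ci_even. destruct k. lia.
    assert (HW := Wi_upper (2*k+1)). replace (S (2*k+1)) with (2 * S k)%nat in HW by lia.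
    rewrite mult_INR in HW. simpl (INR 2) in HW. replace (1+1) with 2 in HW by ring.
    apply Rmult_le_reg_r with (PI / 2 * cb (S k)). nra. rewrite divK by nra.
    replace (/ (INR (S k) * cb (S k)) * (PI / 2 * cb (S k))) with (PI / (2 * INR (S k))) by (field; lra). auto. }
  assert (H0 := tau_nonneg k).
  assert (tau k * tau k <= / (INR k * cb k) * / (INR k * cb k)) by (apply Rmult_le_compat; auto).
  assert (/ (INR k * cb k) * / (INR k * cb k) <= 4 / INR k).
  { apply Rmult_le_reg_r with (INR k * cb k * (INR k * cb k)). nra.
    replace (/ (INR k * cb k) * / (INR k * cb k) * (INR k * cb k * (INR k * cb k))) with 1 by (field; lra).
    replace (4 / INR k * (INR k * cb k * (INR k * cb k))) with (4 * INR k * (cb k * cb k)) by (field; lra). auto. }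
  lra. Qed.

Lemma arch r : exists n : nat, r < INR n.
Proof. destruct (nfloor_ex (Rmax 0 r) (Rmax_l 0 r)) as [n Hn]. exists (S n). rewrite S_INR.
  assert (H := Rmax_r 0 r). lra. Qed.

Lemma Sn_lower N K : PI^2/3 - 2 * tau K - 2 * INR K * cb (S N) <= Sn N.
Proof. destruct (D_bounds N K) as [H1 _]. rewrite T_eq in H1. assert (H2 := D_le N K). lra. Qed.

Lemma Sn_le N : Sn N <= PI^2/3.
Proof. destruct (Rle_or_lt (Sn N) (PI^2/3)) as [H|H]; auto. exfalso.
  destruct (arch (INR N / (Sn N - PI^2/3))) as [K HK].
  assert (H1 := D_ge N K). destruct (D_bounds N K) as [_ H2]. rewrite T_eq in H2.
  assert (H3 := tau_nonneg K). assert (HN := pos_INR N).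
  assert (INR N / INR (S K) < Sn N - PI^2/3).
  { rewrite S_INR. apply Rmult_lt_reg_r with (INR K + 1). pose proof (pos_INR K). lra. rewrite divK by (pose proof (pos_INR K); lra).
    apply Rmult_lt_reg_r with (/ (Sn N - PI^2/3)). apply Rinv_0_lt_compat; lra.
    replace ((Sn N - PI ^ 2 / 3) * (INR K + 1) * / (Sn N - PI ^ 2 / 3)) with (INR K + 1) by (field; lra).
    unfold Rdiv in HK. lra. }
  lra. Qed.

Theorem mainTheorem1 :
  is_series (fun k : nat => term (S k)) (PI ^ 2 / 3).
Proof.
  assert (L : is_lim_seq (sum_n (fun k : nat => term (S k))) (PI ^ 2 / 3)).
  2:{ exact L. }
  apply is_lim_seq_spec. intros eps. destruct eps as [e He]. simpl.
  destruct (arch (64 / (e*e))) as [K0 HK0]. set (K := S K0).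
  assert (HK : (1 <= K)%nat) by (unfold K; lia).
  assert (HKr : 1 <= INR K) by (apply (le_INR 1); auto).
  assert (Htau : tau K < e/4).
  { assert (Hs := tau_sq K HK). assert (Ht := tau_nonneg K).
    assert (64 / (e*e) < INR K) by (unfold K; rewrite S_INR; lra).
    assert (4 / INR K < e/4 * (e/4)).
    { apply Rmult_lt_reg_r with (INR K). lra. rewrite divK by lra.
      apply Rmult_lt_reg_r with (16 / (e*e)). apply Rdiv_lt_0_compat; nra.
      replace (e / 4 * (e / 4) * INR K * (16 / (e * e))) with (INR K) by (field; lra).
      replace (4 * (16 / (e*e))) with (64 / (e*e)) by (field; lra). lra. }
    nra. }
  set (d := e / (4 * INR K)). assert (Hd : 0 < d) by (unfold d; apply Rdiv_lt_0_compat; lra).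
  destruct (arch (/ (d*d))) as [N0 HN0].
  exists N0. intros n Hn. rewrite sum_n_ssum. fold (Sn (S n)).
  assert (Hc : cb (S (S n)) < d).
  { assert (Hq := cb_sq_up (S (S n))). assert (Hp := cb_pos (S (S n))).
    assert (INR N0 <= INR n) by (apply le_INR; lia).
    assert (Hb : 1 < d * d * (2 * INR (S (S n)) + 1)).
    { rewrite !S_INR. assert (/ (d*d) < INR n) by lra.
      apply Rmult_lt_reg_l with (/ (d*d)). apply Rinv_0_lt_compat; nra.
      replace (/ (d * d) * (d * d * (2 * (INR n + 1 + 1) + 1))) with (2 * (INR n + 1 + 1) + 1) by (field; lra).
      pose proof (pos_INR n). lra. }
    assert (cb (S (S n)) * cb (S (S n)) < d * d).
    { assert (0 < 2 * INR (S (S n)) + 1) by (pose proof (pos_INR (S (S n))); lra). nra. }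
    nra. }
  assert (HL := Sn_lower (S n) K). assert (HU := Sn_le (S n)).
  assert (2 * INR K * cb (S (S n)) < e / 2).
  { assert (2 * INR K * d = e / 2) by (unfold d; field; lra). nra. }
  rewrite Rabs_left1 by lra. lra.
Qed.
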